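(* For every positive integer $k$ and every integer $A\ge0$, \[\mathcal{R}_{k,(k+1)^2}\big(Ak(k+1)\big)=\mathcal{R}_{k+1,k(k+1)}\big(Ak(k+1)\big)=\tfrac12 kA(A+1)+(A+1).\]
   Context: For $a,b>0$ and $t\ge0$, let $\Delta_{a,b}(t)\subset\mathbb{R}^2$ be the closed right triangle with vertices $(0,0)$, $(t/a,0)$ and $(0,t/b)$, and let $\mathcal{R}_{a,b}(t)=\#\big(\Delta_{a,b}(t)\cap\mathbb{Z}_{\ge0}^2\big)$ be the number of lattice points it contains. *)

(* Defs.v *)
From HB Require Import structures.
From mathcomp Require Import all_boot all_order all_algebra finmap.
From mathcomp Require Import boolp classical_sets cardinality reals.
Set Implicit Arguments. Unset Strict Implicit. Unset Printing Implicit Defensive.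
Import Order.TTheory GRing.Theory Num.Theory.
Local Open Scope ring_scope.
Local Open Scope classical_set_scope.

Definition Delta {R : realType} (a b t : R) : set (R * R) :=
  [set p | 0 <= p.1 /\ 0 <= p.2 /\ a * p.1 + b * p.2 <= t].

Definition latpts {R : realType} (a b t : R) : set (nat * nat) :=
  [set p | Delta a b t (p.1%:R, p.2%:R)].

(* R_{a,b}(t) = number of lattice points in Delta_{a,b}(t)
   (the set is finite for a,b>0; fset_set of an infinite set would be empty). *)
Definition Rcount {R : realType} (a b t : R) : nat :=
  #|` fset_set (latpts a b t) |.

(* Main.v *)
Require Import Defs.
From HB Require Import structures.
From mathcomp Require Import all_boot all_order all_algebra finmap.
From mathcomp Require Import boolp classical_sets cardinality reals.
From mathcomp Require Import zify ring.
Import Order.TTheory GRing.Theory Num.Theory.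
Local Open Scope ring_scope.
Local Open Scope classical_set_scope.

Lemma latpts_nat (R : realType) (a b t : nat) :
  latpts (a%:R : R) b%:R t%:R = [set p | (a * p.1 + b * p.2 <= t)%N].
Proof.
apply/seteqP; split => p /=; rewrite /latpts /Delta /= -!natrM -natrD ler_nat.
  by case=> _ [].
by move=> h; rewrite !ler0n.
Qed.

Definition boxseq (P : pred (nat * nat)) (N : nat) :=
  [seq p <- [seq (x, y) | y <- iota 0 N.+1, x <- iota 0 N.+1] | P p].

Lemma boxseq_uniq P N : uniq (boxseq P N).
Proof.
apply: filter_uniq; apply: allpairs_uniq; rewrite ?iota_uniq //.
by move=> [a b] [c d] _ _ /= [-> ->].
Qed.

Lemma box_set (P : pred (nat * nat)) N :
  (forall p, P p -> p.1 <= N /\ p.2 <= N)%N ->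
  [set p | P p] = [set` [fset x in boxseq P N]%fset].
Proof.
move=> hb; apply/seteqP; split => p; rewrite /= ?inE /boxseq mem_filter.
  move=> Pp; rewrite Pp andTb; case: p Pp => x y Pp.
  have [h1 h2] := hb _ Pp; simpl in h1, h2.
  apply/allpairsPdep; exists y, x; rewrite !mem_iota; split => //; lia.
by case/andP.
Qed.

Lemma card_box (P : pred (nat * nat)) N :
  (forall p, P p -> p.1 <= N /\ p.2 <= N)%N ->
  #|` fset_set [set p | P p]| = count P [seq (x, y) | y <- iota 0 N.+1, x <- iota 0 N.+1].
Proof.
move=> hb; rewrite (box_set _ _ hb) set_fsetK card_fseq undup_id ?boxseq_uniq //.
by rewrite size_filter.
Qed.

Lemma finite_box (P : pred (nat * nat)) N :
  (forall p, P p -> p.1 <= N /\ p.2 <= N)%N -> finite_set [set p | P p].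
Proof. by move=> hb; rewrite (box_set _ _ hb); apply: finite_fset. Qed.
Definition phi (k : nat) (p : nat * nat) : nat * nat :=
  ((k + 1) * p.2 + p.1 %% (k + 1), p.1 %/ (k + 1))%N.

Lemma phiK k : involutive (phi k).
Proof.
case=> x y; rewrite /phi /=.
have hk : (0 < k + 1)%N by rewrite addn1.
have hr : (x %% (k + 1) < k + 1)%N by rewrite ltn_mod.
rewrite [((k + 1) * y)%N]mulnC divnMDl // (divn_small hr) addn0 modnMDl (modn_small hr).
by rewrite [((k + 1) * _)%N]mulnC -divn_eq.
Qed.

Lemma key k A x y :
  (k * x + (k + 1) ^ 2 * y <= A * k * (k + 1))%N =
  ((k + 1) * (phi k (x, y)).1 + k * (k + 1) * (phi k (x, y)).2 <= A * k * (k + 1))%N.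
Proof.
rewrite /phi /=.
have hk : (0 < k + 1)%N by rewrite addn1.
have hr : (x %% (k + 1) < k + 1)%N by rewrite ltn_mod.
rewrite {1}(div.divn_eq x (k + 1)).
move: hr; set r := (x %% (k + 1))%N; set q := (x %/ (k + 1))%N => hr.
set M := ((k + 1) * y + r + k * q)%N.
have e1 : (k * (q * (k + 1) + r) + (k + 1) ^ 2 * y + r = (k + 1) * M)%N.
  rewrite /M; ring.
have e2 : ((k + 1) * ((k + 1) * y + r) + k * (k + 1) * q = (k + 1) * M)%N.
  rewrite /M; ring.
have e3 : (A * k * (k + 1) = (k + 1) * (A * k))%N by ring.
rewrite e2 e3 leq_pmul2l //; apply/idP/idP => h.
  have : ((k + 1) * M < (k + 1) * (A * k).+1)%N.
    rewrite -e1 mulnS; lia.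
  by rewrite ltn_pmul2l.
have : ((k + 1) * M <= (k + 1) * (A * k))%N by rewrite leq_pmul2l.
lia.
Qed.

Lemma count_le m n : count (fun x => (x <= m)%N) (iota 0 n) = minn m.+1 n.
Proof.
elim: n => // n IH; rewrite -addn1 iotaD count_cat IH /= add0n addn0.
case: leqP => h; lia.
Qed.

Lemma slice k A y : (0 < k)%N ->
  count (fun x => ((k + 1) * x + k * (k + 1) * y <= A * k * (k + 1))%N)
        (iota 0 (A * k * (k + 1)).+1)
  = if (y <= A)%N then (k * (A - y) + 1)%N else 0%N.
Proof.
move=> hk; case: (leqP y A) => hy.
  have [d hd] : exists d, A = (y + d)%N by exists (A - y)%N; lia.
  subst A.
  rewrite (@eq_count _ _ (fun x => (x <= k * d)%N)); last first.
    by move=> x /=; apply/idP/idP => h; nia.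
  rewrite count_le; have : (k * d <= (y + d) * k * (k + 1))%N by nia.
  lia.
apply/eqP; rewrite eqn0Ngt -has_count; apply/hasPn => x _; apply/negP => h.
nia.
Qed.

Lemma sumn_zero (s : seq nat) (f : nat -> nat) :
  (forall y, y \in s -> f y = 0%N) -> sumn (map f s) = 0%N.
Proof.
elim: s => //= a s IH h; rewrite h ?inE ?eqxx // IH // => y hy.
by apply: h; rewrite inE hy orbT.
Qed.

Lemma S_form k A B : (A <= B)%N ->
  (2 * sumn [seq k * (B - y) + 1 | y <- iota 0 A.+1] + k * A * (A + 1)
   = (A + 1) * (2 * k * B + 2))%N.
Proof.
elim: A => [|A IH] hAB; first by rewrite /=; lia.
rewrite (_ : A.+2 = A.+1 + 1)%N; last by rewrite addn1. rewrite iotaD map_cat sumn_cat.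
have := IH (ltnW hAB).
set S := sumn [seq _ | y <- iota 0 A.+1] => {}IH /=.
have [c hc] : exists c, B = (A.+1 + c)%N by exists (B - A.+1)%N; lia.
subst B.
have -> : (A.+1 + c - (0 + A.+1) = c)%N by lia.
nia.
Qed.

Local Close Scope classical_set_scope.
Theorem mainTheorem15 (R : realType) (k A : nat) (hk : (0 < k)%N) :
  let t : R := (A * k * (k + 1))%:R in
  (Rcount (k%:R : R) ((k + 1) ^ 2)%:R t)%:R = (Rcount ((k + 1)%:R : R) (k * (k + 1))%:R t)%:R :> R /\
  (Rcount ((k + 1)%:R : R) (k * (k + 1))%:R t)%:R
    = 2^-1 * k%:R * A%:R * (A%:R + 1) + (A%:R + 1) :> R.
Proof.
move=> t; rewrite /t /Rcount !latpts_nat.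
set N := (A * k * (k + 1))%N.
pose P1 : pred (nat * nat) := fun p => (k * p.1 + (k + 1) ^ 2 * p.2 <= N)%N.
pose P2 : pred (nat * nat) := fun p => ((k + 1) * p.1 + k * (k + 1) * p.2 <= N)%N.
have -> : [set p | (k * p.1 + (k + 1) ^ 2 * p.2 <= N)%N]%classic = [set p | P1 p]%classic by [].
have -> : [set p | ((k + 1) * p.1 + k * (k + 1) * p.2 <= N)%N]%classic = [set p | P2 p]%classic by [].
have b1 : forall p, P1 p -> (p.1 <= N /\ p.2 <= N)%N.
  by case=> x y; rewrite /P1 /= => h; split; nia.
have b2 : forall p, P2 p -> (p.1 <= N /\ p.2 <= N)%N.
  by case=> x y; rewrite /P2 /= => h; split; nia.
have E : [set p | P2 p]%classic = (phi k @` [set p | P1 p])%classic.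
  apply/seteqP; split => p /=.
    move=> h; exists (phi k p); last exact: phiK.
    by case: (phi k p) (phiK k p) => x y e; rewrite /P1 /= key e.
  by case=> -[x y] hq <-; move: hq; rewrite /P1 /P2 /= key.
have C12 : #|` fset_set [set p | P1 p]%classic| = #|` fset_set [set p | P2 p]%classic|.
  rewrite E fset_set_image; last exact: (finite_box _ _ b1).
  apply/esym/eqP/card_in_imfsetP => x y _ _; exact: (can_inj (phiK k)).
rewrite C12; split => //.
rewrite (card_box _ _ b2) count_flatten -map_comp.
rewrite (eq_map (g := fun y => if (y <= A)%N then (k * (A - y) + 1)%N else 0%N)); last first.
  by move=> y /=; rewrite count_map; exact: slice.
have hAN : (A <= N)%N by rewrite /N; nia.
rewrite (_ : N.+1 = A.+1 + (N - A))%N; last by lia.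
rewrite iotaD map_cat sumn_cat [X in (_ + X)%N]sumn_zero; last first.
  by move=> y; rewrite mem_iota => /andP[h _]; rewrite leqNgt -(add0n A.+1) h.
rewrite addn0 (_ : map _ (iota 0 A.+1) = map (fun y => (k * (A - y) + 1)%N) (iota 0 A.+1)); last first.
  by apply/eq_in_map => y; rewrite mem_iota add0n ltnS => /andP[_ ->].
have := @S_form k A A (leqnn A).
set n := sumn _ => hn.
have h2 : (2 * n)%:R = (k * A * (A + 1) + 2 * (A + 1))%:R :> R by congr (_%:R); nia.
have -> : (n%:R : R) = 2^-1 * (2 * n)%:R.
  by rewrite natrM mulrA mulVf ?mul1r // pnatr_eq0.
rewrite h2 natrD !natrM natrD.
by field.
Qed.
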